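(* Let $p$ be a prime and $N\geq p$ an integer, and let $\mathcal E_{N,p}$ be the $\mathbb{R}_{\max}$-module of continuous convex piecewise affine functions $f$ on $[1,p]$ with integral slopes such that $f(1)=f(p)$ and $-f'_+(1)+pf'_-(p)\leq N$ (operations: pointwise max, and addition of real constants). Let $\phi_0=0$ and, for $a\in\{1,\dots,N-p\}$, $\phi_a(x)=\max\{-a(x-1),b(x-p)\}$ with $b=\lfloor(N-a)/p\rfloor$. Then each $\phi_a$, $0\leq a\leq N-p$, is an extremal element of $\mathcal E_{N,p}$; the sets $\{\phi_a+x\mid x\in\mathbb{R}_{\max}\}$ are exactly the extremal rays of $\mathcal E_{N,p}$; and these elements generate $\mathcal E_{N,p}$, i.e. the map $\sigma:\mathbb{R}_{\max}^{N-p+1}\to\mathcal E_{N,p}$, $\sigma((x_a))=\max_a(\phi_a+x_a)$, is surjective.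
   Context: $\mathbb{R}_{\max}=\mathbb{R}\cup\{-\infty\}$ with addition $\max$ and multiplication $+$ (so $\phi+(-\infty)$ is the zero element $-\infty$). An element $f$ of an $\mathbb{R}_{\max}$-module is extremal if $f_1\vee f_2=f$ implies $f_1=f$ or $f_2=f$; the set $\{f+x\mid x\in\mathbb{R}_{\max}\}$ for extremal $f$ is called an extremal ray. *)

(* Defs.v *)
From Stdlib Require Import Reals ZArith Znumtheory List.
From Coquelicot Require Import Coquelicot.
Open Scope R_scope.

(* R_max = R ∪ {-oo}: None is -oo. *)
Definition Rmx := option R.

(* An element of the R_max-module of functions [1,p] -> R_max that are either
   identically -oo (None) or real valued (Some f, f only relevant on [1,p]). *)
Definition elt := option (R -> R).

Definition in_dom (p : nat) (x : R) : Prop := 1 <= x <= INR p.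

Definition elt_eq (p : nat) (f g : elt) : Prop :=
  match f, g with
  | None, None => True
  | Some f, Some g => forall x, in_dom p x -> f x = g x
  | _, _ => False
  end.

Definition ejoin (f g : elt) : elt :=
  match f, g with
  | None, _ => g
  | _, None => f
  | Some f, Some g => Some (fun x => Rmax (f x) (g x))
  end.

Definition eshift (f : elt) (c : Rmx) : elt :=
  match f, c with
  | Some f, Some c => Some (fun x => f x + c)
  | _, _ => None
  end.

Definition cont_on (a b : R) (f : R -> R) : Prop :=
  forall x, a <= x <= b ->
    filterlim f (within (fun y => a <= y <= b) (locally x)) (locally (f x)).

Definition convex_on (a b : R) (f : R -> R) : Prop :=
  forall x y l, a <= x <= b -> a <= y <= b -> 0 <= l <= 1 ->
    f (l * x + (1 - l) * y) <= l * f x + (1 - l) * f y.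

Definition pw_affine_int (a b : R) (f : R -> R) : Prop :=
  exists (n : nat) (t : nat -> R) (s : nat -> Z) (c : nat -> R),
    t 0%nat = a /\ t n = b /\
    (forall i, (i < n)%nat -> t i < t (S i)) /\
    (forall i x, (i < n)%nat -> t i <= x <= t (S i) -> f x = IZR (s i) * x + c i).

Definition right_deriv (f : R -> R) (x d : R) : Prop :=
  filterlim (fun h => (f (x + h) - f x) / h) (at_right 0) (locally d).
Definition left_deriv (f : R -> R) (x d : R) : Prop :=
  filterlim (fun h => (f (x + h) - f x) / h) (at_left 0) (locally d).

Definition in_E (N p : nat) (F : elt) : Prop :=
  match F with
  | None => True
  | Some f =>
      cont_on 1 (INR p) f /\ convex_on 1 (INR p) f /\ pw_affine_int 1 (INR p) f /\
      f 1 = f (INR p) /\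
      exists dl dr, right_deriv f 1 dl /\ left_deriv f (INR p) dr /\
                    - dl + INR p * dr <= INR N
  end.

Definition extremal (N p : nat) (f : elt) : Prop :=
  in_E N p f /\ f <> None /\
  forall f1 f2, in_E N p f1 -> in_E N p f2 ->
    elt_eq p (ejoin f1 f2) f -> elt_eq p f1 f \/ elt_eq p f2 f.

Definition same_ray (p : nat) (f g : elt) : Prop :=
  forall h, (exists x : Rmx, elt_eq p h (eshift f x)) <->
            (exists y : Rmx, elt_eq p h (eshift g y)).

Definition phi (N p a : nat) : elt :=
  match a with
  | O => Some (fun _ => 0)
  | S _ => Some (fun x => Rmax (- INR a * (x - 1))
                                (INR (Nat.div (N - a) p) * (x - INR p)))
  end.

Definition sigma_map (N p : nat) (xs : nat -> Rmx) : elt :=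
  fold_right ejoin None (map (fun a => eshift (phi N p a) (xs a)) (seq 0 (N - p + 1))).

(* Main.v *)
Require Import Defs.
From Stdlib Require Import Reals ZArith Znumtheory List.
From Coquelicot Require Import Coquelicot.
Open Scope R_scope.
From Stdlib Require Import Lra Lia.

Inductive pwl : R -> R -> (R -> R) -> Prop :=
| pwl1 u v f (s : Z) c : u < v -> (forall x, u <= x <= v -> f x = IZR s * x + c) -> pwl u v f
| pwl2 u w v f : pwl u w f -> pwl w v f -> pwl u v f.

Lemma pwl_lt u v f : pwl u v f -> u < v.
Proof. induction 1; lra. Qed.

Lemma pwl_restr u v f : pwl u v f -> forall u' v', u <= u' -> u' < v' -> v' <= v -> pwl u' v' f.
Proof.
  induction 1 as [u v f s c Huv Hf | u w v f H1 IH1 H2 IH2]; intros u' v' H1' H2' H3'.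
  - apply pwl1 with s c; auto. intros; apply Hf; lra.
  - destruct (Rle_dec v' w). { apply IH1; lra. }
    destruct (Rle_dec w u'). { apply IH2; lra. }
    apply pwl2 with w; [apply IH1 | apply IH2]; lra.
Qed.

Lemma aff_sign a b u v x : u <= x <= v -> 0 <= a * u + b -> 0 <= a * v + b -> 0 <= a * x + b.
Proof. intros. destruct (Rle_dec 0 a); nra. Qed.

Lemma pwl_max_aff u v f g (s1 s2 : Z) c1 c2 : u < v ->
  (forall x, u <= x <= v -> f x = IZR s1 * x + c1) ->
  (forall x, u <= x <= v -> g x = IZR s2 * x + c2) ->
  pwl u v (fun x => Rmax (f x) (g x)).
Proof.
  intros Huv Hf Hg.
  set (a := IZR s1 - IZR s2). set (b := c1 - c2).
  assert (Hd : forall x, u <= x <= v -> f x - g x = a * x + b).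
  { intros x Hx; rewrite Hf, Hg by auto; unfold a, b; ring. }
  assert (C1 : forall u' v', u <= u' -> u' < v' -> v' <= v -> 0 <= a*u'+b -> 0 <= a*v'+b ->
    pwl u' v' (fun x => Rmax (f x) (g x))).
  { intros u' v' H1 H2 H3 H4 H5. apply pwl1 with s1 c1; auto. intros x Hx.
    rewrite Rmax_left. apply Hf; lra. assert (0 <= a*x+b) by (apply (aff_sign a b u' v'); auto).
    rewrite <- Hd in H by lra. lra. }
  assert (C2 : forall u' v', u <= u' -> u' < v' -> v' <= v -> a*u'+b <= 0 -> a*v'+b <= 0 ->
    pwl u' v' (fun x => Rmax (f x) (g x))).
  { intros u' v' H1 H2 H3 H4 H5. apply pwl1 with s2 c2; auto. intros x Hx.
    rewrite Rmax_right. apply Hg; lra. assert (0 <= (-a)*x+(-b)) by (apply (aff_sign (-a) (-b) u' v'); auto; lra).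
    assert (f x - g x = a*x+b) by (apply Hd; lra). lra. }
  destruct (Rle_dec 0 (a*u+b)) as [q1|q1]; destruct (Rle_dec 0 (a*v+b)) as [q2|q2].
  - apply C1; lra.
  - destruct (Req_dec (a*u+b) 0) as [e|e]. { apply C2; lra. }
    assert (a < 0) by nra.
    set (rr := - b / a). assert (Hr : a * rr + b = 0) by (unfold rr; field; lra).
    assert (u < rr). { apply Rnot_le_lt; intro. assert (a*u <= a*rr) by nra. lra. }
    assert (rr < v). { apply Rnot_le_lt; intro. assert (a*v >= a*rr) by nra. lra. }
    apply pwl2 with rr; [apply C1 | apply C2]; lra.
  - destruct (Req_dec (a*v+b) 0) as [e|e]. { apply C2; lra. }
    assert (0 < a) by nra.
    set (rr := - b / a). assert (Hr : a * rr + b = 0) by (unfold rr; field; lra).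
    assert (u < rr). { apply Rnot_le_lt; intro. assert (a*u >= a*rr) by nra. lra. }
    assert (rr < v). { apply Rnot_le_lt; intro. assert (a*v <= a*rr) by nra. lra. }
    apply pwl2 with rr; [apply C2 | apply C1]; lra.
  - apply C2; lra.
Qed.

Lemma pwl_max_aff_gen u v f (s : Z) c : (forall x, u <= x <= v -> f x = IZR s * x + c) ->
  forall g, pwl u v g -> pwl u v (fun x => Rmax (f x) (g x)).
Proof.
  intros Hf g Hg. revert Hf. induction Hg as [u v g s2 c2 Huv Hg | u w v g H1 IH1 H2 IH2]; intros Hf.
  - eapply pwl_max_aff; eauto.
  - apply pwl_lt in H1 as L1. apply pwl_lt in H2 as L2.
    apply pwl2 with w; [apply IH1 | apply IH2]; intros; apply Hf; lra.
Qed.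

Lemma pwl_max u v f g : pwl u v f -> pwl u v g -> pwl u v (fun x => Rmax (f x) (g x)).
Proof.
  intros Hf; revert g. induction Hf as [u v f s c Huv Hf | u w v f H1 IH1 H2 IH2]; intros g Hg.
  - eapply pwl_max_aff_gen; eauto.
  - apply pwl_lt in H1 as L1. apply pwl_lt in H2 as L2.
    apply pwl2 with w; [apply IH1 | apply IH2]; eapply pwl_restr; eauto; lra.
Qed.

Lemma pwl_ext u v f g : pwl u v f -> (forall x, u <= x <= v -> f x = g x) -> pwl u v g.
Proof.
  induction 1 as [u v f s c Huv Hf | u w v f H1 IH1 H2 IH2]; intros E.
  - apply pwl1 with s c; auto. intros; rewrite <- E; auto.
  - apply pwl_lt in H1 as L1. apply pwl_lt in H2 as L2.
    apply pwl2 with w; [apply IH1 | apply IH2]; intros; apply E; lra.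
Qed.

Lemma pwl_lip u v f : pwl u v f -> exists K, 0 <= K /\
  forall x y, u <= x -> x <= y -> y <= v -> Rabs (f y - f x) <= K * (y - x).
Proof.
  induction 1 as [u v f s c Huv Hf | u w v f H1 IH1 H2 IH2].
  - exists (Rabs (IZR s)). split. apply Rabs_pos. intros x y H H' H''.
    rewrite Hf, Hf by lra. replace (IZR s * y + c - (IZR s * x + c)) with (IZR s * (y - x)) by ring.
    rewrite Rabs_mult, (Rabs_right (y - x)) by lra. lra.
  - destruct IH1 as [K1 [HK1 P1]]. destruct IH2 as [K2 [HK2 P2]].
    apply pwl_lt in H1 as L1. apply pwl_lt in H2 as L2.
    exists (Rmax K1 K2). split. apply Rle_trans with K1; auto; apply Rmax_l.
    assert (M1 := Rmax_l K1 K2). assert (M2 := Rmax_r K1 K2).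
    intros x y Hx Hxy Hy.
    destruct (Rle_dec y w) as [r|r].
    + specialize (P1 x y Hx Hxy r). nra.
    + destruct (Rle_dec w x) as [r0|r0].
      * specialize (P2 x y r0 Hxy Hy). nra.
      * specialize (P1 x w Hx ltac:(lra) ltac:(lra)). specialize (P2 w y ltac:(lra) ltac:(lra) Hy).
        replace (f y - f x) with ((f y - f w) + (f w - f x)) by ring.
        eapply Rle_trans. apply Rabs_triang. nra.
Qed.

Lemma pw_to_pwl u v f : u < v -> pw_affine_int u v f -> pwl u v f.
Proof.
  intros Huv [n [t [s [c [H0 [Hn [Hm Hp]]]]]]].
  assert (n <> 0%nat) by (intro; subst; lra).
  assert (K : forall k, (1 <= k <= n)%nat -> pwl (t 0%nat) (t k) f).
  { induction k as [|k IH]; intros Hk. lia.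
    destruct k as [|k].
    - apply pwl1 with (s 0%nat) (c 0%nat). apply Hm; lia. intros; apply Hp; [lia|auto].
    - apply pwl2 with (t (S k)). apply IH; lia.
      apply pwl1 with (s (S k)) (c (S k)). apply Hm; lia. intros; apply Hp; [lia|auto]. }
  rewrite <- H0, <- Hn. apply K; lia.
Qed.

Lemma pwl_to_pw u v f : pwl u v f -> pw_affine_int u v f.
Proof.
  induction 1 as [u v f s0 c0 Huv Hf | u w v f H1 IH1 H2 IH2].
  - exists 1%nat, (fun i => if (i =? 0)%nat then u else v), (fun _ => s0), (fun _ => c0).
    simpl. repeat split; auto.
    + intros i Hi. replace i with 0%nat by lia. simpl. auto.
    + intros i x Hi. replace i with 0%nat by lia. simpl. auto.
  - destruct IH1 as [n1 [t1 [s1 [c1 [A0 [An [Am Ap]]]]]]].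
    destruct IH2 as [n2 [t2 [s2 [c2 [B0 [Bn [Bm Bp]]]]]]].
    exists (n1 + n2)%nat, (fun i => if (i <=? n1)%nat then t1 i else t2 (i - n1)%nat),
      (fun i => if (i <? n1)%nat then s1 i else s2 (i - n1)%nat),
      (fun i => if (i <? n1)%nat then c1 i else c2 (i - n1)%nat).
    assert (E : forall i, (n1 <= i)%nat -> (if (i <=? n1)%nat then t1 i else t2 (i - n1)%nat) = t2 (i - n1)%nat).
    { intros i Hi. destruct (Nat.leb_spec i n1). replace i with n1 by lia. rewrite Nat.sub_diag. congruence. auto. }
    split; [|split; [|split]].
    + simpl. auto.
    + rewrite E by lia. replace (n1 + n2 - n1)%nat with n2 by lia. auto.
    + intros i Hi. destruct (Nat.ltb_spec (S i) (S n1)).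
      * rewrite (proj2 (Nat.leb_le i n1)) by lia. rewrite (proj2 (Nat.leb_le (S i) n1)) by lia. apply Am; lia.
      * rewrite !E by lia. replace (S i - n1)%nat with (S (i - n1)) by lia. apply Bm; lia.
    + intros i x Hi Hx. destruct (Nat.ltb_spec i n1).
      * rewrite (proj2 (Nat.leb_le i n1)), (proj2 (Nat.leb_le (S i) n1)) in Hx by lia. apply Ap; auto.
      * rewrite !E in Hx by lia. replace (S i - n1)%nat with (S (i - n1)) in Hx by lia. apply Bp; [lia|auto].
Qed.

Lemma pwl_first u v f : pwl u v f -> exists (s : Z) d, 0 < d /\ u + d <= v /\
  forall x, u <= x <= u + d -> f x = f u + IZR s * (x - u).
Proof.
  induction 1 as [u v f s0 c0 Huv Hf | u w v f H1 IH1 H2 IH2].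
  - exists s0, (v - u). repeat split; try lra. intros x Hx. rewrite !Hf by lra. ring.
  - apply pwl_lt in H2. destruct IH1 as [s0 [d [A [B C]]]]. exists s0, d. repeat split; auto; lra.
Qed.

Lemma pwl_last u v f : pwl u v f -> exists (s : Z) d, 0 < d /\ u <= v - d /\
  forall x, v - d <= x <= v -> f x = f v + IZR s * (x - v).
Proof.
  induction 1 as [u v f s0 c0 Huv Hf | u w v f H1 IH1 H2 IH2].
  - exists s0, (v - u). repeat split; try lra. intros x Hx. rewrite !Hf by lra. ring.
  - apply pwl_lt in H1. destruct IH2 as [s0 [d [A [B C]]]]. exists s0, d. repeat split; auto; lra.
Qed.

Lemma pwl_point u v f : pwl u v f -> forall y, u <= y <= v -> exists (s : Z) al be,
  u <= al /\ al < be /\ be <= v /\ al <= y <= be /\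
  forall x, al <= x <= be -> f x = f y + IZR s * (x - y).
Proof.
  induction 1 as [u v f s0 c0 Huv Hf | u w v f H1 IH1 H2 IH2]; intros y Hy.
  - exists s0, u, v. repeat split; try lra. intros x Hx. rewrite !Hf by lra. ring.
  - apply pwl_lt in H1 as L1. apply pwl_lt in H2 as L2. destruct (Rle_dec y w).
    + destruct (IH1 y) as [s0 [al [be Hs]]]. lra. exists s0, al, be. intuition lra.
    + destruct (IH2 y) as [s0 [al [be Hs]]]. lra. exists s0, al, be. intuition lra.
Qed.

Lemma lip_cont a b f K : 0 <= K ->
  (forall x y, a <= x -> x <= y -> y <= b -> Rabs (f y - f x) <= K * (y - x)) -> cont_on a b f.
Proof.
  intros HK Hl x Hx. apply filterlim_locally. intros eps.
  unfold within. assert (Hd : 0 < eps / (K + 1)) by (apply Rdiv_lt_0_compat; [apply cond_pos|lra]).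
  exists (mkposreal _ Hd). intros y Hy Dy. simpl in Hy. unfold ball in *; simpl in *.
  unfold AbsRing_ball, abs, minus, plus, opp in *; simpl in *.
  assert (Rabs (f y - f x) <= K * Rabs (y - x)).
  { destruct (Rle_dec x y).
    - rewrite (Rabs_right (y - x)) by lra. apply Hl; lra.
    - rewrite Rabs_minus_sym, (Rabs_left (y - x)) by lra. assert (Rabs (f x - f y) <= K * (x - y)) by (apply Hl; lra). lra. }
  assert (eps * K < eps * (K + 1)) by (assert (0 < eps) by apply cond_pos; nra).
  assert (Hy2 : Rabs (y - x) < eps / (K + 1)) by exact Hy.
  assert (K * Rabs (y - x) <= K * (eps / (K + 1))) by (apply Rmult_le_compat_l; lra).
  assert (K * (eps / (K + 1)) < eps).
  { apply Rmult_lt_reg_r with (K + 1). lra. field_simplify; lra. }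
  change (Rabs (f y - f x) < eps). lra.
Qed.

Lemma pw_cont u v f : u < v -> pw_affine_int u v f -> cont_on u v f.
Proof.
  intros H Hp. apply pw_to_pwl in Hp; auto. destruct (pwl_lip _ _ _ Hp) as [K [HK Hl]].
  eapply lip_cont; eauto.
Qed.

Lemma rd_of_aff f u s d : 0 < d -> (forall x, u <= x <= u + d -> f x = f u + s * (x - u)) ->
  right_deriv f u s.
Proof.
  intros Hd Hf. unfold right_deriv.
  apply filterlim_ext_loc with (fun _ => s); [|apply filterlim_const].
  unfold at_right, within. exists (mkposreal _ Hd). intros h Hh Hp. simpl in Hh.
  assert (Hh2 : Rabs (h - 0) < d) by exact Hh. rewrite Rminus_0_r in Hh2.
  apply Rabs_def2 in Hh2. rewrite Hf by lra. field. lra.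
Qed.

Lemma ld_of_aff f v s d : 0 < d -> (forall x, v - d <= x <= v -> f x = f v + s * (x - v)) ->
  left_deriv f v s.
Proof.
  intros Hd Hf. unfold left_deriv.
  apply filterlim_ext_loc with (fun _ => s); [|apply filterlim_const].
  unfold at_left, within. exists (mkposreal _ Hd). intros h Hh Hp. simpl in Hh.
  assert (Hh2 : Rabs (h - 0) < d) by exact Hh. rewrite Rminus_0_r in Hh2.
  apply Rabs_def2 in Hh2. rewrite Hf by lra. field. lra.
Qed.

Lemma rd_unique f u d1 d2 : right_deriv f u d1 -> right_deriv f u d2 -> d1 = d2.
Proof.
  intros H1 H2. eapply (@filterlim_locally_unique _ R_AbsRing R_NormedModule); eauto.
  apply Proper_StrongProper. apply at_right_proper_filter.
Qed.

Lemma ld_unique f u d1 d2 : left_deriv f u d1 -> left_deriv f u d2 -> d1 = d2.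
Proof.
  intros H1 H2. eapply (@filterlim_locally_unique _ R_AbsRing R_NormedModule); eauto.
  apply Proper_StrongProper. apply at_left_proper_filter.
Qed.

Section Conv.
Variables (a b : R) (f : R -> R) (Hc : convex_on a b f) (c m : R).

Lemma G1 x z v : a <= x -> x < z -> z < v -> v <= b -> f v <= c + m * v -> f z = c + m * z ->
  c + m * x <= f x.
Proof.
  intros. set (l := (v - z) / (v - x)).
  assert (Hl : 0 < l < 1).
  { unfold l; split. apply Rdiv_lt_0_compat; lra.
    apply Rmult_lt_reg_r with (v - x). lra. field_simplify; lra. }
  assert (Hz : l * x + (1 - l) * v = z) by (unfold l; field; lra).
  assert (H5 := Hc x v l ltac:(lra) ltac:(lra) ltac:(lra)). rewrite Hz in H5.
  assert (c + m * z = l * (c + m * x) + (1 - l) * (c + m * v)) by (rewrite <- Hz; ring).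
  nra.
Qed.

Lemma G2 u z x : a <= u -> u < z -> z < x -> x <= b -> f u <= c + m * u -> f z = c + m * z ->
  c + m * x <= f x.
Proof.
  intros. set (l := (x - z) / (x - u)).
  assert (Hl : 0 < l < 1).
  { unfold l; split. apply Rdiv_lt_0_compat; lra.
    apply Rmult_lt_reg_r with (x - u). lra. field_simplify; lra. }
  assert (Hz : l * u + (1 - l) * x = z) by (unfold l; field; lra).
  assert (H5 := Hc u x l ltac:(lra) ltac:(lra) ltac:(lra)). rewrite Hz in H5.
  assert (c + m * z = l * (c + m * u) + (1 - l) * (c + m * x)) by (rewrite <- Hz; ring).
  nra.
Qed.

Lemma G3 u z v : a <= u -> u < z -> z < v -> v <= b -> f u < c + m * u -> f v <= c + m * v ->
  f z < c + m * z.
Proof.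
  intros. set (l := (v - z) / (v - u)).
  assert (Hl : 0 < l < 1).
  { unfold l; split. apply Rdiv_lt_0_compat; lra.
    apply Rmult_lt_reg_r with (v - u). lra. field_simplify; lra. }
  assert (Hz : l * u + (1 - l) * v = z) by (unfold l; field; lra).
  assert (H5 := Hc u v l ltac:(lra) ltac:(lra) ltac:(lra)). rewrite Hz in H5.
  assert (c + m * z = l * (c + m * u) + (1 - l) * (c + m * v)) by (rewrite <- Hz; ring).
  nra.
Qed.

Lemma support al be : a <= al -> al < be -> be <= b ->
  (forall x, al <= x <= be -> f x = c + m * x) -> forall z, a <= z <= b -> c + m * z <= f z.
Proof.
  intros H1 H2 H3 Hf z Hz.
  destruct (Rle_dec z al).
  - destruct (Req_dec z al). subst; rewrite Hf; lra.
    apply (G1 z al be); try lra; rewrite Hf; lra.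
  - destruct (Rle_dec z be). rewrite Hf; lra.
    apply (G2 al be z); try lra; rewrite Hf; lra.
Qed.

Lemma zeroL u z v : a <= u -> u < z -> z < v -> v <= b ->
  (forall x, u <= x <= v -> f x <= c + m * x) -> f u = c + m * u -> f z = c + m * z ->
  forall x, u <= x <= v -> f x = c + m * x.
Proof.
  intros H1 H2 H3 H4 Hle Hu Hz x Hx. apply Rle_antisym. apply Hle; auto.
  destruct (Rle_dec x z).
  - destruct (Req_dec x z). subst; lra. destruct (Req_dec x u). subst; lra.
    apply (G1 x z v); try lra. apply Hle; lra.
  - apply (G2 u z x); try lra.
Qed.

Lemma zeroR u z v : a <= u -> u < z -> z < v -> v <= b ->
  (forall x, u <= x <= v -> f x <= c + m * x) -> f v = c + m * v -> f z = c + m * z ->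
  forall x, u <= x <= v -> f x = c + m * x.
Proof.
  intros H1 H2 H3 H4 Hle Hv Hz x Hx. apply Rle_antisym. apply Hle; auto.
  destruct (Rle_dec x z).
  - destruct (Req_dec x z). subst; lra.
    apply (G1 x z v); try lra.
  - destruct (Req_dec x v). subst; lra. apply (G2 u z x); try lra. apply Hle; lra.
Qed.
End Conv.

Definition Eprops (N p : nat) (g : R -> R) : Prop :=
  convex_on 1 (INR p) g /\ pwl 1 (INR p) g /\ g 1 = g (INR p) /\
  exists s1 s2 : Z, - IZR s1 + INR p * IZR s2 <= INR N /\
   (exists d, 0 < d /\ 1 + d <= INR p /\ forall x, 1 <= x <= 1 + d -> g x = g 1 + IZR s1 * (x - 1)) /\
   (exists d, 0 < d /\ 1 <= INR p - d /\ forall x, INR p - d <= x <= INR p -> g x = g (INR p) + IZR s2 * (x - INR p)).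

Lemma inE_Eprops N p g : 1 < INR p -> in_E N p (Some g) <-> Eprops N p g.
Proof.
  intros Hp. split.
  - intros [Hc [Hcv [Hpw [He [dl [dr [Hdl [Hdr Hb]]]]]]]].
    apply pw_to_pwl in Hpw; auto.
    destruct (pwl_first _ _ _ Hpw) as [s1 [d1 [D1 [D1' F1]]]].
    destruct (pwl_last _ _ _ Hpw) as [s2 [d2 [D2 [D2' F2]]]].
    repeat split; auto. exists s1, s2. split.
    + assert (dl = IZR s1) by (apply (rd_unique g 1); [exact Hdl | exact (rd_of_aff g 1 (IZR s1) d1 D1 F1)]).
      assert (dr = IZR s2) by (apply (ld_unique g (INR p)); [exact Hdr | exact (ld_of_aff g (INR p) (IZR s2) d2 D2 F2)]).
      subst; auto.
    + split; [exists d1 | exists d2]; auto.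
  - intros [Hcv [Hpw [He [s1 [s2 [Hb [[d1 [D1 [D1' F1]]] [d2 [D2 [D2' F2]]]]]]]]]].
    split. apply pw_cont; auto. apply pwl_to_pw; auto.
    split; auto. split. apply pwl_to_pw; auto. split; auto.
    exists (IZR s1), (IZR s2). split. exact (rd_of_aff g 1 (IZR s1) d1 D1 F1). split; auto. exact (ld_of_aff g (INR p) (IZR s2) d2 D2 F2).
Qed.

Lemma Eprops_shift N p g k : Eprops N p g -> Eprops N p (fun x => g x + k).
Proof.
  intros [Hcv [Hpw [He [s1 [s2 [Hb [[d1 [D1 [D1' F1]]] [d2 [D2 [D2' F2]]]]]]]]]].
  split. { intros x y l Hx Hy Hl. specialize (Hcv x y l Hx Hy Hl). nra. }
  split. { clear -Hpw. induction Hpw. apply pwl1 with s (c + k); auto. intros; rewrite H0; auto; ring.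
           eapply pwl2; eauto. }
  split. rewrite He; auto.
  exists s1, s2. split; auto. split.
  exists d1; repeat split; auto. intros; rewrite F1; auto; ring.
  exists d2; repeat split; auto. intros; rewrite F2; auto; ring.
Qed.

Lemma convex_max a b f g : convex_on a b f -> convex_on a b g -> convex_on a b (fun x => Rmax (f x) (g x)).
Proof.
  intros Hf Hg x y l Hx Hy Hl. specialize (Hf x y l Hx Hy Hl). specialize (Hg x y l Hx Hy Hl).
  assert (A1 := Rmax_l (f x) (g x)). assert (A2 := Rmax_r (f x) (g x)).
  assert (A3 := Rmax_l (f y) (g y)). assert (A4 := Rmax_r (f y) (g y)).
  apply Rmax_lub; nra.
Qed.

Lemma slope_cmp N p f h : 1 < INR p -> Eprops N p f -> pwl 1 (INR p) h ->
  (forall x, 1 <= x <= INR p -> f x <= h x) -> h 1 = f 1 -> h (INR p) = f (INR p) ->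
  exists s1 s2 : Z, - IZR s1 + INR p * IZR s2 <= INR N /\
   (exists d, 0 < d /\ 1 + d <= INR p /\ forall x, 1 <= x <= 1 + d -> h x = h 1 + IZR s1 * (x - 1)) /\
   (exists d, 0 < d /\ 1 <= INR p - d /\ forall x, INR p - d <= x <= INR p -> h x = h (INR p) + IZR s2 * (x - INR p)).
Proof.
  intros Hp [Hcv [Hpw [He [s1 [s2 [Hb [[d1 [D1 [D1' F1]]] [d2 [D2 [D2' F2]]]]]]]]]] Hh Hle H1 HP.
  destruct (pwl_first _ _ _ Hh) as [t1 [e1 [E1 [E1' G1']]]].
  destruct (pwl_last _ _ _ Hh) as [t2 [e2 [E2 [E2' G2']]]].
  exists t1, t2. split.
  - assert (IZR s1 <= IZR t1).
    { set (x := 1 + Rmin d1 e1). assert (Rmin d1 e1 <= d1) by apply Rmin_l.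
      assert (Rmin d1 e1 <= e1) by apply Rmin_r. assert (0 < Rmin d1 e1) by (apply Rmin_glb_lt; auto).
      assert (Q : f x <= h x) by (apply Hle; unfold x; lra).
      rewrite F1, G1' in Q by (unfold x; lra). rewrite H1 in Q. unfold x in Q. nra. }
    assert (IZR t2 <= IZR s2).
    { set (x := INR p - Rmin d2 e2). assert (Rmin d2 e2 <= d2) by apply Rmin_l.
      assert (Rmin d2 e2 <= e2) by apply Rmin_r. assert (0 < Rmin d2 e2) by (apply Rmin_glb_lt; auto).
      assert (Q : f x <= h x) by (apply Hle; unfold x; lra).
      rewrite F2, G2' in Q by (unfold x; lra). rewrite HP in Q. unfold x in Q. nra. }
    nra.
  - split; [exists e1 | exists e2]; auto.
Qed.

Lemma Eprops_max N p f g : 1 < INR p -> Eprops N p f -> Eprops N p g -> Eprops N p (fun x => Rmax (f x) (g x)).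
Proof.
  intros Hp Ef Eg. pose proof Ef as [Hcf [Hpf [Hef _]]]. pose proof Eg as [Hcg [Hpg [Heg _]]].
  split. apply convex_max; auto. split. apply pwl_max; auto. split. rewrite Hef, Heg; auto.
  destruct (Rle_dec (g 1) (f 1)).
  - apply (slope_cmp N p f); auto. apply pwl_max; auto.
    intros; apply Rmax_l. rewrite Rmax_left; auto. rewrite Rmax_left; auto. lra.
  - apply (slope_cmp N p g); auto. apply pwl_max; auto.
    intros; apply Rmax_r. rewrite Rmax_right; auto. lra. rewrite Rmax_right; auto. lra.
Qed.

Lemma inE_shift N p F x : 1 < INR p -> in_E N p F -> in_E N p (eshift F x).
Proof.
  intros Hp H. destruct F as [f|]; destruct x as [c|]; simpl; auto.
  apply inE_Eprops; auto. apply Eprops_shift. apply inE_Eprops; auto.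
Qed.

Lemma inE_join N p F G : 1 < INR p -> in_E N p F -> in_E N p G -> in_E N p (ejoin F G).
Proof.
  intros Hp H1 H2. destruct F as [f|]; destruct G as [g|]; simpl; auto.
  apply inE_Eprops; auto. apply Eprops_max; auto; apply inE_Eprops; auto.
Qed.

Definition phif (N p a : nat) : R -> R := fun z =>
  match a with O => 0 | S _ => Rmax (- INR a * (z - 1)) (INR (Nat.div (N - a) p) * (z - INR p)) end.

Lemma phi_eq N p a : phi N p a = Some (phif N p a).
Proof. destruct a; reflexivity. Qed.

Lemma phif_pos N p a z : (1 <= a)%nat ->
  phif N p a z = Rmax (- INR a * (z - 1)) (INR (Nat.div (N - a) p) * (z - INR p)).
Proof. destruct a. lia. reflexivity. Qed.

Lemma phif_le0 N p a z : 1 <= z <= INR p -> phif N p a z <= 0.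
Proof.
  intros Hz. destruct a. simpl; lra. rewrite phif_pos by lia.
  assert (0 <= INR (S a)) by apply pos_INR. assert (0 <= INR ((N - S a) / p)) by apply pos_INR.
  apply Rmax_lub; nra.
Qed.

Lemma phif_1 N p a : 1 <= INR p -> phif N p a 1 = 0.
Proof.
  intros Hp. destruct a. reflexivity. rewrite phif_pos by lia.
  assert (0 <= INR ((N - S a) / p)) by apply pos_INR.
  rewrite Rmax_left; nra.
Qed.

Lemma nat_facts N p a : (2 <= p)%nat -> (1 <= a)%nat -> (a <= N - p)%nat ->
  (1 <= (N - a) / p)%nat /\ (a + p * ((N - a) / p) <= N)%nat.
Proof.
  intros Hp Ha HaN. split.
  - apply Nat.div_str_pos. lia.
  - assert (p * ((N - a) / p) <= N - a)%nat by (apply Nat.Div0.mul_div_le). lia.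
Qed.

Lemma Eprops_phi N p a : (2 <= p)%nat -> (a <= N - p)%nat -> Eprops N p (phif N p a).
Proof.
  intros Hp2 HaN. assert (Hp : 1 < INR p) by (apply lt_1_INR; lia).
  destruct a as [|a'].
  - simpl. split. intros x y l _ _ _; simpl; lra. split. apply pwl1 with 0%Z 0; auto. intros; simpl; ring.
    split; auto. exists 0%Z, 0%Z. split. simpl. rewrite Rmult_0_r. assert (0 <= INR N) by apply pos_INR. lra.
    split. exists (INR p - 1). repeat split; try lra. intros; simpl; ring.
    exists (INR p - 1). repeat split; try lra. intros; simpl; ring.
  - set (a := S a') in *. destruct (nat_facts N p a) as [Hb1 Hab]; try lia.
    set (b := ((N - a) / p)%nat) in *.
    assert (HA : 1 <= INR a) by (apply (le_INR 1); lia).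
    assert (HB : 1 <= INR b) by (apply (le_INR 1); lia).
    assert (Hab' : INR a + INR p * INR b <= INR N) by (rewrite <- mult_INR, <- plus_INR; apply le_INR; auto).
    assert (E : forall z, phif N p a z = Rmax (- INR a * (z - 1)) (INR b * (z - INR p))) by (intros; apply phif_pos; lia).
    set (x0 := (INR a + INR b * INR p) / (INR a + INR b)).
    assert (Hx0 : x0 * (INR a + INR b) = INR a + INR b * INR p) by (unfold x0; field; lra).
    assert (Hx01 : 1 < x0) by nra. assert (Hx0p : x0 < INR p) by nra.
    assert (EL : forall z, z <= x0 -> phif N p a z = - INR a * (z - 1)).
    { intros z Hz. rewrite E. apply Rmax_left. nra. }
    assert (ER : forall z, x0 <= z -> phif N p a z = INR b * (z - INR p)).
    { intros z Hz. rewrite E. apply Rmax_right. nra. }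
    split.
    { intros x y l Hx Hy Hl. rewrite !E.
      assert (C1 : convex_on 1 (INR p) (fun z => - INR a * (z - 1))) by (intros x' y' l' _ _ _; right; ring).
      assert (C2 : convex_on 1 (INR p) (fun z => INR b * (z - INR p))) by (intros x' y' l' _ _ _; right; ring).
      exact (convex_max 1 (INR p) _ _ C1 C2 x y l Hx Hy Hl). }
    split.
    { eapply pwl_ext. 2: intros; symmetry; apply E.
      apply pwl_max_aff with (s1 := (- Z.of_nat a)%Z) (s2 := Z.of_nat b) (c1 := INR a) (c2 := - INR b * INR p); auto.
      intros; rewrite opp_IZR, <- INR_IZR_INZ; ring. intros; rewrite <- INR_IZR_INZ; ring. }
    split. { rewrite EL, ER by lra. ring. }
    exists (- Z.of_nat a)%Z, (Z.of_nat b). rewrite opp_IZR, <- !INR_IZR_INZ. split. lra.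
    split.
    + exists (x0 - 1). repeat split; try lra. intros x Hx. rewrite !EL by lra. ring.
    + exists (INR p - x0). repeat split; try lra. intros x Hx. rewrite !ER by lra. ring.
Qed.

Lemma floor_bound N p a (s : Z) : (0 < p)%nat -> (a <= N)%nat ->
  INR a + INR p * IZR s <= INR N -> IZR s <= INR ((N - a) / p).
Proof.
  intros Hp HaN H. set (q := ((N - a) / p)%nat).
  destruct (Rle_dec (IZR s) (INR q)) as [|Hn]; auto. exfalso.
  apply Rnot_le_lt in Hn. rewrite INR_IZR_INZ in Hn. apply lt_IZR in Hn.
  assert (Hs : IZR (Z.of_nat q + 1) <= IZR s) by (apply IZR_le; lia).
  rewrite plus_IZR, <- INR_IZR_INZ in Hs.
  assert (Hd := Nat.div_mod (N - a) p ltac:(lia)). fold q in Hd.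
  assert (Hr := Nat.mod_upper_bound (N - a) p ltac:(lia)).
  assert (E : INR (N - a) = INR p * INR q + INR ((N - a) mod p)).
  { rewrite Hd at 1. rewrite plus_INR, mult_INR. auto. }
  assert (INR ((N - a) mod p) < INR p) by (apply lt_INR; auto).
  rewrite minus_INR in E by auto.
  assert (0 <= INR p) by apply pos_INR.
  assert (INR p * (INR q + 1) <= INR p * IZR s) by (apply Rmult_le_compat_l; auto).
  nra.
Qed.

Lemma pick N p a : (2 <= p)%nat -> (a <= N - p)%nat ->
  exists z, 1 < z < INR p /\ forall g, Eprops N p g ->
  (forall x, 1 <= x <= INR p -> g x <= phif N p a x) ->
  (g z = phif N p a z -> forall x, 1 <= x <= INR p -> g x = phif N p a x).
Proof.
  intros Hp2 HaN. assert (Hp : 1 < INR p) by (apply lt_1_INR; lia).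
  destruct a as [|a'].
  - exists ((1 + INR p) / 2). split. lra. intros g Eg Hle.
    pose proof Eg as [Hcv [Hpw [He [s1 [s2 [Hb [[d1 [D1 [D1' F1]]] [d2 [D2 [D2' F2]]]]]]]]]].
    intros Hz x Hx. simpl in *.
    assert (Hle' : forall x, 1 <= x <= INR p -> g x <= 0 + 0 * x) by (intros; rewrite Rmult_0_l, Rplus_0_r; auto).
    assert (H1 : g 1 = 0).
    { destruct (Rle_dec 0 (g 1)). assert (g 1 <= 0) by (apply Hle; lra). lra.
      exfalso. assert (g ((1 + INR p)/2) < 0 + 0 * ((1 + INR p)/2)).
      { apply (G3 1 (INR p) g Hcv 0 0 1 _ (INR p)); try lra; try (apply Hle'; lra). }
      lra. }
    transitivity (0 + 0 * x); [|ring].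
    apply (zeroL 1 (INR p) g Hcv 0 0 1 ((1 + INR p)/2) (INR p)); try lra; auto.
  - set (a := S a') in *. destruct (nat_facts N p a) as [Hb1 Hab]; try lia.
    set (b := ((N - a) / p)%nat) in *.
    assert (HA : 1 <= INR a) by (apply (le_INR 1); lia).
    assert (HB : 1 <= INR b) by (apply (le_INR 1); lia).
    assert (E : forall z, phif N p a z = Rmax (- INR a * (z - 1)) (INR b * (z - INR p))) by (intros; apply phif_pos; lia).
    set (x0 := (INR a + INR b * INR p) / (INR a + INR b)).
    assert (Hx0 : x0 * (INR a + INR b) = INR a + INR b * INR p) by (unfold x0; field; lra).
    assert (Hx01 : 1 < x0) by nra. assert (Hx0p : x0 < INR p) by nra.
    assert (EL : forall z, z <= x0 -> phif N p a z = INR a + (- INR a) * z).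
    { intros z Hz. rewrite E. rewrite Rmax_left. ring. nra. }
    assert (ER : forall z, x0 <= z -> phif N p a z = (- INR b * INR p) + INR b * z).
    { intros z Hz. rewrite E. rewrite Rmax_right. ring. nra. }
    exists ((1 + x0) / 2). split. lra. intros g Eg Hle.
    pose proof Eg as [Hcv [Hpw [He [s1 [s2 [Hb [[d1 [D1 [D1' F1]]] [d2 [D2 [D2' F2]]]]]]]]]].
    intros Hz.
    rewrite EL in Hz by lra.
    assert (HleL : forall x, 1 <= x <= x0 -> g x <= INR a + (- INR a) * x) by (intros; rewrite <- EL by lra; apply Hle; lra).
    assert (HleR : forall x, x0 <= x <= INR p -> g x <= (- INR b * INR p) + INR b * x) by (intros; rewrite <- ER by lra; apply Hle; lra).
    assert (H1 : g 1 = INR a + (- INR a) * 1).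
    { destruct (Rle_dec (INR a + (- INR a) * 1) (g 1)). assert (g 1 <= INR a + (- INR a) * 1) by (apply HleL; lra). lra.
      exfalso. assert (g ((1 + x0)/2) < INR a + (- INR a) * ((1 + x0)/2)).
      { apply (G3 1 (INR p) g Hcv _ _ 1 _ x0); try lra. apply HleL; lra. }
      lra. }
    assert (GL : forall x, 1 <= x <= x0 -> g x = INR a + (- INR a) * x).
    { apply (zeroL 1 (INR p) g Hcv _ _ 1 ((1 + x0)/2) x0); try lra; auto. }
    assert (Hs1 : IZR s1 = - INR a).
    { set (x := 1 + Rmin d1 (x0 - 1)). assert (Rmin d1 (x0 - 1) <= d1) by apply Rmin_l.
      assert (Rmin d1 (x0 - 1) <= x0 - 1) by apply Rmin_r. assert (0 < Rmin d1 (x0 - 1)) by (apply Rmin_glb_lt; lra).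
      assert (Q1 := F1 x ltac:(unfold x; lra)). rewrite (GL x) in Q1 by (unfold x; lra).
      rewrite H1 in Q1. unfold x in Q1. nra. }
    assert (HgP : g (INR p) = 0) by lra.
    assert (Hs2 : IZR s2 = INR b).
    { apply Rle_antisym.
      - apply floor_bound; try lia. rewrite Hs1 in Hb. lra.
      - set (x := INR p - Rmin d2 (INR p - x0)). assert (Rmin d2 (INR p - x0) <= d2) by apply Rmin_l.
        assert (Rmin d2 (INR p - x0) <= INR p - x0) by apply Rmin_r. assert (0 < Rmin d2 (INR p - x0)) by (apply Rmin_glb_lt; lra).
        assert (Q1 := F2 x ltac:(unfold x; lra)). assert (Q2 := HleR x ltac:(unfold x; lra)).
        rewrite HgP in Q1. unfold x in Q1, Q2. nra. }
    set (w := INR p - Rmin d2 (INR p - x0) / 2).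
    assert (Rmin d2 (INR p - x0) <= d2) by apply Rmin_l.
    assert (Rmin d2 (INR p - x0) <= INR p - x0) by apply Rmin_r. assert (0 < Rmin d2 (INR p - x0)) by (apply Rmin_glb_lt; lra).
    assert (GR : forall x, x0 <= x <= INR p -> g x = (- INR b * INR p) + INR b * x).
    { apply (zeroR 1 (INR p) g Hcv _ _ x0 w (INR p)); try (unfold w; lra); auto.
      all: try (rewrite HgP; ring). all: rewrite F2 by (unfold w; lra); rewrite HgP, Hs2; ring. }
    intros x Hx. destruct (Rle_dec x x0).
    + rewrite EL, GL; auto; lra.
    + rewrite ER, GR; auto; lra.
Qed.

Lemma Rmax_cases x y : Rmax x y = x \/ Rmax x y = y.
Proof. unfold Rmax; destruct (Rle_dec x y); auto. Qed.

Lemma extremal_phi N p a : (2 <= p)%nat -> (a <= N - p)%nat -> extremal N p (phi N p a).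
Proof.
  intros Hp2 HaN. assert (Hp : 1 < INR p) by (apply lt_1_INR; lia).
  split. { rewrite phi_eq. apply inE_Eprops; auto. apply Eprops_phi; auto. }
  split. { rewrite phi_eq; discriminate. }
  intros f1 f2 H1 H2 Hj. rewrite phi_eq in *.
  destruct f1 as [f1|]; destruct f2 as [f2|]; simpl in Hj |- *; auto.
  apply inE_Eprops in H1; auto. apply inE_Eprops in H2; auto.
  destruct (pick N p a) as [z [Hz Pk]]; auto.
  assert (L1 : forall x, 1 <= x <= INR p -> f1 x <= phif N p a x).
  { intros x Hx. rewrite <- Hj by (unfold in_dom; lra). apply Rmax_l. }
  assert (L2 : forall x, 1 <= x <= INR p -> f2 x <= phif N p a x).
  { intros x Hx. rewrite <- Hj by (unfold in_dom; lra). apply Rmax_r. }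
  assert (Hjz := Hj z ltac:(unfold in_dom; lra)).
  destruct (Rmax_cases (f1 z) (f2 z)) as [e|e]; rewrite e in Hjz.
  - left. intros x Hx. apply (Pk f1); auto.
  - right. intros x Hx. apply (Pk f2); auto.
Qed.

Lemma sigma_inE_gen N p xs l : (2 <= p)%nat -> (forall a, In a l -> (a <= N - p)%nat) ->
  in_E N p (fold_right ejoin None (map (fun a => eshift (phi N p a) (xs a)) l)).
Proof.
  intros Hp2 Hl. assert (Hp : 1 < INR p) by (apply lt_1_INR; lia).
  induction l as [|a l IH]; simpl; auto.
  apply inE_join; auto. apply inE_shift; auto. apply extremal_phi; auto. apply Hl; simpl; auto.
  apply IH. intros; apply Hl; simpl; auto.
Qed.

Lemma fold_some (F : nat -> R -> R) l : l <> nil -> exists h,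
  fold_right ejoin None (map (fun a => Some (F a)) l) = Some h /\
  (forall z M, (forall a, In a l -> F a z <= M) -> h z <= M) /\
  (forall z a, In a l -> F a z <= h z).
Proof.
  induction l as [|a l IH]; intros Hn. congruence.
  destruct l as [|a' l'].
  - exists (F a). simpl. split; auto. split. intros z M H; apply H; auto.
    intros z b [e|[]]; subst; lra.
  - destruct IH as [h [E [U L]]]. discriminate.
    exists (fun z => Rmax (F a z) (h z)). split. simpl in *. rewrite E. reflexivity.
    split.
    + intros z M H. apply Rmax_lub. apply H; simpl; auto. apply U. intros; apply H; simpl; auto.
    + intros z b [e|Hb]. subst; apply Rmax_l. eapply Rle_trans. apply L; eauto. apply Rmax_r.
Qed.

Lemma fold_none N p l : fold_right ejoin None (map (fun a => eshift (phi N p a) None) l) = None.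
Proof. induction l as [|a l IH]; simpl; auto. rewrite phi_eq, IH. reflexivity. Qed.

Lemma gen_point N p g y : (2 <= p)%nat -> (p <= N)%nat -> Eprops N p g -> 1 <= y <= INR p ->
  exists a c, (a <= N - p)%nat /\ (forall w, 1 <= w <= INR p -> phif N p a w + c <= g w) /\
    g y <= phif N p a y + c.
Proof.
  intros Hp2 HN Eg Hy. assert (Hp : 1 < INR p) by (apply lt_1_INR; lia).
  pose proof Eg as [Hcv [Hpw [He [s1 [s2 [Hb [[d1 [D1 [D1' F1]]] [d2 [D2 [D2' F2]]]]]]]]]].
  destruct (pwl_point _ _ _ Hpw y Hy) as [m [al [be [A1 [A2 [A3 [A4 Fm]]]]]]].
  assert (Sy : forall w, 1 <= w <= INR p -> g y + IZR m * (w - y) <= g w).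
  { intros w Hw. replace (g y + IZR m * (w - y)) with ((g y - IZR m * y) + IZR m * w) by ring.
    apply (support 1 (INR p) g Hcv _ _ al be); auto.
    intros x Hx; rewrite Fm; auto; ring. }
  assert (S1 : forall w, 1 <= w <= INR p -> g 1 + IZR s1 * (w - 1) <= g w).
  { intros w Hw. replace (g 1 + IZR s1 * (w - 1)) with ((g 1 - IZR s1) + IZR s1 * w) by ring.
    apply (support 1 (INR p) g Hcv _ _ 1 (1 + d1)); auto; try lra.
    intros x Hx; rewrite F1; auto; ring. }
  assert (S2 : forall w, 1 <= w <= INR p -> g (INR p) + IZR s2 * (w - INR p) <= g w).
  { intros w Hw. replace (g (INR p) + IZR s2 * (w - INR p)) with ((g (INR p) - IZR s2 * INR p) + IZR s2 * w) by ring.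
    apply (support 1 (INR p) g Hcv _ _ (INR p - d2) (INR p)); auto; try lra.
    intros x Hx; rewrite F2; auto; ring. }
  set (y' := (al + be) / 2).
  assert (Gy' : g y' = g y + IZR m * (y' - y)) by (apply Fm; unfold y'; lra).
  assert (Hy'1 : 1 < y') by (unfold y'; lra). assert (Hy'p : y' < INR p) by (unfold y'; lra).
  assert (Q1 := Sy 1 ltac:(lra)). assert (Q2 := S1 y' ltac:(lra)).
  assert (Q3 := Sy (INR p) ltac:(lra)). assert (Q4 := S2 y' ltac:(lra)).
  assert (Ms1 : IZR s1 <= IZR m) by nra.
  assert (Ms2 : IZR m <= IZR s2) by nra.
  assert (HN' : INR p <= INR N) by (apply le_INR; auto).
  destruct (Z.lt_trichotomy m 0) as [Hm|[Hm|Hm]].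
  -
    assert (Hm' : IZR m < 0) by (apply IZR_lt; auto).
    assert (Hs2 : 0 < IZR s2) by nra.
    assert (Hs2' : 1 <= IZR s2) by (apply IZR_le; apply lt_IZR in Hs2; lia).
    set (a := Z.to_nat (- m)).
    assert (HA : INR a = - IZR m) by (unfold a; rewrite INR_IZR_INZ, Z2Nat.id by lia; rewrite opp_IZR; auto).
    assert (Ha1 : (1 <= a)%nat) by (unfold a; lia).
    assert (HaN : (a + p <= N)%nat).
    { apply INR_le. rewrite plus_INR. nra. }
    assert (HB := floor_bound N p a s2 ltac:(lia) ltac:(lia) ltac:(nra)).
    set (B := INR ((N - a) / p)) in *.
    exists a, (g y + INR a * (y - 1)). split. lia. split.
    + intros w Hw. rewrite phif_pos by auto. fold B.
      assert (- INR a * (w - 1) + (g y + INR a * (y - 1)) <= g w) by (specialize (Sy w Hw); nra).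
      assert (B * (w - INR p) + (g y + INR a * (y - 1)) <= g w) by (specialize (S2 w Hw); nra).
      destruct (Rmax_cases (- INR a * (w - 1)) (B * (w - INR p))) as [e|e]; rewrite e; auto.
    + rewrite phif_pos by auto. eapply Rle_trans; [|apply Rplus_le_compat_r; apply Rmax_l]. nra.
  -
    subst m. exists 0%nat, (g y). split. lia. split.
    + intros w Hw. simpl. specialize (Sy w Hw). simpl in Sy. lra.
    + simpl. lra.
  -
    assert (Hm' : 0 < IZR m) by (apply IZR_lt; auto).
    assert (Hs1 : IZR s1 < 0) by nra.
    assert (Hs1' : IZR s1 <= -1) by (apply IZR_le; apply lt_IZR in Hs1; lia).
    set (k := Z.to_nat m).
    assert (HK : INR k = IZR m) by (unfold k; rewrite INR_IZR_INZ, Z2Nat.id by lia; auto).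
    assert (Hk1 : (1 <= k)%nat) by (unfold k; lia).
    assert (Hpk : (p * k + 1 <= N)%nat).
    { apply INR_le. rewrite plus_INR, mult_INR, HK. change (INR 1) with 1.
      assert (INR p * IZR m <= INR p * IZR s2) by (apply Rmult_le_compat_l; lra). lra. }
    set (a := (N - p * k)%nat).
    assert (Ha1 : (1 <= a)%nat) by (unfold a; lia).
    assert (HaN : (a <= N - p)%nat) by (unfold a; nia).
    assert (Hdiv : ((N - a) / p)%nat = k).
    { unfold a. replace (N - (N - p * k))%nat with (k * p)%nat by lia. apply Nat.div_mul. lia. }
    assert (HA : INR a = INR N - INR p * IZR m).
    { unfold a. rewrite minus_INR by lia. rewrite mult_INR, HK. auto. }
    exists a, (g y - IZR m * (y - INR p)). split. auto. split.
    + intros w Hw. rewrite phif_pos by auto. rewrite Hdiv, HK.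
      assert (IZR m * (w - INR p) + (g y - IZR m * (y - INR p)) <= g w) by (specialize (Sy w Hw); nra).
      assert (INR p * IZR m <= INR p * IZR s2) by (apply Rmult_le_compat_l; lra).
      assert (0 <= (IZR s1 + INR a) * (w - 1)) by (apply Rmult_le_pos; lra).
      assert (- INR a * (w - 1) + (g y - IZR m * (y - INR p)) <= g w) by (specialize (S1 w Hw); nra).
      destruct (Rmax_cases (- INR a * (w - 1)) (IZR m * (w - INR p))) as [e|e]; rewrite e; auto.
    + rewrite phif_pos by auto. rewrite Hdiv, HK. eapply Rle_trans; [|apply Rplus_le_compat_r; apply Rmax_r]. nra.
Qed.

Lemma generation N p f : (2 <= p)%nat -> (p <= N)%nat -> in_E N p f ->
  exists xs : nat -> Rmx, elt_eq p f (sigma_map N p xs).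
Proof.
  intros Hp2 HN Hf. assert (Hp : 1 < INR p) by (apply lt_1_INR; lia).
  destruct f as [g|].
  2:{ exists (fun _ => None). unfold sigma_map. rewrite fold_none. simpl. auto. }
  apply inE_Eprops in Hf; auto.
  pose proof Hf as [Hcv [Hpw [He [s1 [s2 [Hb [[d1 [D1 [D1' F1]]] [d2 [D2 [D2' F2]]]]]]]]]].
  assert (S1 : forall w, 1 <= w <= INR p -> g 1 + IZR s1 * (w - 1) <= g w).
  { intros w Hw. replace (g 1 + IZR s1 * (w - 1)) with ((g 1 - IZR s1) + IZR s1 * w) by ring.
    apply (support 1 (INR p) g Hcv _ _ 1 (1 + d1)); auto; try lra.
    intros x Hx; rewrite F1; auto; ring. }
  set (Sa := fun a c => forall w, 1 <= w <= INR p -> phif N p a w + c <= g w).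
  assert (Bd : forall a, bound (Sa a)).
  { intros a. exists (g 1). intros c Hc. specialize (Hc 1 ltac:(lra)). rewrite phif_1 in Hc; lra. }
  assert (Ne : forall a, exists c, Sa a c).
  { intros a. exists (g 1 - Rabs (IZR s1) * (INR p - 1)). intros w Hw.
    assert (phif N p a w <= 0) by (apply phif_le0; auto).
    assert (Q := S1 w Hw).
    assert (IZR s1 * (w - 1) >= - Rabs (IZR s1) * (INR p - 1)).
    { unfold Rabs; destruct (Rcase_abs (IZR s1)); nra. }
    lra. }
  set (X := fun a => proj1_sig (completeness (Sa a) (Bd a) (Ne a))).
  assert (XP : forall a, is_lub (Sa a) (X a)) by (intros; unfold X; destruct completeness; auto).
  exists (fun a => Some (X a)).
  unfold sigma_map.
  rewrite (map_ext _ (fun a => Some (fun z => phif N p a z + X a))) by (intros; rewrite phi_eq; reflexivity).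
  destruct (fold_some (fun a z => phif N p a z + X a) (seq 0 (N - p + 1))) as [h [E [U L]]].
  { rewrite Nat.add_comm. simpl. discriminate. }
  rewrite E. simpl. intros z Hz. unfold in_dom in Hz. apply Rle_antisym.
  - destruct (gen_point N p g z) as [a [c [HaN [Hc Hgz]]]]; auto.
    assert (c <= X a) by (apply (XP a); auto).
    eapply Rle_trans; [|apply (L z a)]. lra. apply in_seq. lia.
  - apply U. intros a _. 
    assert (X a <= g z - phif N p a z).
    { apply (XP a). intros c Hc. specialize (Hc z Hz). lra. }
    lra.
Qed.

Lemma elt_eq_sym p f g : elt_eq p f g -> elt_eq p g f.
Proof. destruct f, g; simpl; auto. intros H x Hx; rewrite H; auto. Qed.

Lemma ext_list N p f xs l : (2 <= p)%nat -> (forall a, In a l -> (a <= N - p)%nat) -> extremal N p f ->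
  elt_eq p f (fold_right ejoin None (map (fun a => eshift (phi N p a) (xs a)) l)) ->
  exists a, In a l /\ elt_eq p f (eshift (phi N p a) (xs a)).
Proof.
  intros Hp2 Hl Hf. assert (Hp : 1 < INR p) by (apply lt_1_INR; lia).
  induction l as [|a l IH]; simpl; intros He.
  - destruct Hf as [_ [Hn _]]. destruct f; simpl in He; [contradiction|congruence].
  - destruct Hf as [HE [Hn Hx]] eqn:Hfe.
    assert (I1 : in_E N p (eshift (phi N p a) (xs a))).
    { apply inE_shift; auto. apply (extremal_phi N p a Hp2). apply Hl; simpl; auto. }
    assert (I2 : in_E N p (fold_right ejoin None (map (fun a => eshift (phi N p a) (xs a)) l))).
    { apply sigma_inE_gen; auto. intros; apply Hl; simpl; auto. }
    destruct (Hx _ _ I1 I2 (elt_eq_sym _ _ _ He)) as [H|H].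
    + exists a. split; auto. apply elt_eq_sym; auto.
    + destruct IH as [b [Hb Hb']]. intros; apply Hl; simpl; auto. apply elt_eq_sym; auto.
      exists b; auto.
Qed.

Lemma ray N p f a c : elt_eq p f (Some (fun z => phif N p a z + c)) -> same_ray p f (phi N p a).
Proof.
  intros Hf h. rewrite phi_eq. destruct f as [g|]; [|simpl in Hf; contradiction]. simpl in Hf.
  split.
  - intros [[d|] Hd].
    + exists (Some (c + d)). destruct h as [k|]; simpl in *; auto.
      intros z Hz. rewrite Hd, Hf; auto. ring.
    + exists None. auto.
  - intros [[d|] Hd].
    + exists (Some (d - c)). destruct h as [k|]; simpl in *; auto.
      intros z Hz. rewrite Hd, Hf; auto. ring.
    + exists None. auto.
Qed.

Theorem propositionA2 (p N : nat) (hp : prime (Z.of_nat p)) (hN : (p <= N)%nat) :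
  (forall a, (a <= N - p)%nat -> extremal N p (phi N p a)) /\
  (forall f, extremal N p f -> exists a, (a <= N - p)%nat /\ same_ray p f (phi N p a)) /\
  (forall xs : nat -> Rmx, in_E N p (sigma_map N p xs)) /\
  (forall f, in_E N p f -> exists xs : nat -> Rmx, elt_eq p f (sigma_map N p xs)).
Proof.
  assert (Hp2 : (2 <= p)%nat) by (apply prime_ge_2 in hp; lia).
  assert (Hseq : forall a, In a (seq 0 (N - p + 1)) -> (a <= N - p)%nat) by (intros a Ha; apply in_seq in Ha; lia).
  split; [|split; [|split]].
  - intros; apply extremal_phi; auto.
  - intros f Hf. destruct (generation N p f) as [xs Hxs]; auto. apply Hf.
    destruct (ext_list N p f xs (seq 0 (N - p + 1))) as [a [Ha He]]; auto.
    exists a. split. auto.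
    destruct (xs a) as [c|] eqn:Ex.
    + rewrite phi_eq in He. simpl in He. apply (ray N p f a c). auto.
    + rewrite phi_eq in He. destruct Hf as [_ [Hn _]]. destruct f; simpl in He; [contradiction|congruence].
  - intros xs. apply sigma_inE_gen; auto.
  - intros f Hf. apply generation; auto.
Qed.
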